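(* For all integers $n \ge 8$ and $d \ge 6$, \[ \binom{d-1}{2} + d\binom{n-d}{2} \le \binom{d-1}{2}\,\mathcal{F}_{P_n}. \]
   Context: $\mathcal{F}_{P_m}$ is the number of minimal forts of the path on $m$ vertices; equivalently $\mathcal{F}_{P_m}=a_m$ where $a_1=a_2=a_3=1$ and $a_m = a_{m-2}+a_{m-3}$ for $m \ge 4$. (A fort is a nonempty vertex set such that every vertex outside it has zero or at least two neighbors in it; minimal means no proper subset is a fort.) Binomial coefficients $\binom{j}{2}$ with $j<2$ are $0$. *)

(* Defs.v *)
From mathcomp Require Import all_boot.
Set Implicit Arguments. Unset Strict Implicit. Unset Printing Implicit Defensive.

(* FPath m = number of minimal forts of the path P_m, given (per the paper's
   context) by a_1 = a_2 = a_3 = 1 and a_m = a_(m-2) + a_(m-3) for m >= 4.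
   The value at m = 0 is irrelevant (set to 0). *)
Fixpoint FPath (m : nat) : nat :=
  match m with
  | 0 => 0
  | 1 => 1
  | 2 => 1
  | 3 => 1
  | S (S ((S ((S k) as y)) as x)) => FPath x + FPath y
  end.

Lemma FPath_rec m : 4 <= m -> FPath m = FPath (m - 2) + FPath (m - 3).
Proof. by case: m => [|[|[|[|k]]]] //= _; rewrite !subn0. Qed.

(* Main.v *)
Require Import Defs.
From mathcomp Require Import all_boot.
From mathcomp Require Import zify.

Lemma bin2_2 k : 'C(k, 2) * 2 = k * (k - 1).
Proof.
elim: k => [|k IH] //.
rewrite binS bin1 mulnDl IH; nia.
Qed.

Lemma Fbound n : 8 <= n -> 3 * ((n - 6) * (n - 7)) + 10 <= 10 * FPath n.
Proof.
elim: n {-2}n (leqnn n) => [|N IH] n hn h8; first lia.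
have [small|big] := leqP n 16.
  move: h8 small; clear.
  do 17 (case: n => [|n]; first by []).
  by [].
rewrite FPath_rec; last lia.
have h2 := IH (n - 2) ltac:(lia) ltac:(lia).
have h3 := IH (n - 3) ltac:(lia) ltac:(lia).
nia.
Qed.

Lemma bin2_3 k : 'C(k, 2) * 2 + k = k * k.
Proof. elim: k => [|k IH] //. rewrite binS bin1 mulnDl; nia. Qed.

Theorem mainTheorem18 (n d : nat) (hn : 8 <= n) (hd : 6 <= d) :
  'C(d - 1, 2) + d * 'C(n - d, 2) <= 'C(d - 1, 2) * FPath n.
Proof.
have hF := @Fbound n hn.
have hF1 : 1 <= FPath n.
  by rewrite lt0n; apply/eqP => H; move: hF; rewrite H muln0 leqn0 addn_eq0 andbF.
have [G HG] : exists G, FPath n = G.+1 by exists (FPath n).-1; lia.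
rewrite HG in hF *.
have [D HD] : exists D, d = D + 6 by exists (d - 6); lia.
subst d.
have -> : D + 6 - 1 = D + 5 by lia.
have hc := bin2_3 (D + 5).
have hE := bin2_3 (n - 6).
have hmm : (n - 6) * (n - 7) + (n - 6) = (n - 6) * (n - 6).
  have -> : n - 6 = (n - 7).+1 by lia.
  rewrite mulnSr; lia.
have h6E : 'C(n - 6, 2) * 6 <= G * 10 by lia.
have he : 'C(n - (D + 6), 2) <= 'C(n - 6, 2) by apply: leq_bin2l; lia.
rewrite mulnSr addnC leq_add2r -[X in X <= _]mulnC.
set c := 'C(D + 5, 2) in hc *.
set e := 'C(n - (D + 6), 2) in he *.
set E := 'C(n - 6, 2) in h6E he hE.
suff : e * (D + 6) * 60 <= c * G * 60 by rewrite leq_pmul2r.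
have s1a : e * (D + 6) * 60 <= E * (D + 6) * 60 by rewrite !leq_mul2r he !orbT.
have s1b : E * (D + 6) * 60 = E * 6 * ((D + 6) * 10).
  by rewrite -!mulnA; congr (E * _); lia.
have s1 : e * (D + 6) * 60 <= E * 6 * ((D + 6) * 10) by rewrite -s1b.
have s2 : E * 6 * ((D + 6) * 10) <= G * 10 * ((D + 6) * 10).
  by rewrite leq_mul2r h6E orbT.
have h3 : (D + 6) * 10 <= ((D + 5) * (D + 5) - (D + 5)) * 3 by nia.
have s3 : G * 10 * ((D + 6) * 10) <= G * 10 * (((D + 5) * (D + 5) - (D + 5)) * 3).
  by rewrite leq_mul2l h3 orbT.
have s4 : G * 10 * (((D + 5) * (D + 5) - (D + 5)) * 3) = c * G * 60.
  have -> : (D + 5) * (D + 5) - (D + 5) = c * 2 by lia.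
  rewrite !mulnA; lia.
by rewrite -s4; apply: leq_trans s3; apply: leq_trans s2.
Qed.
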